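(* Let $A,r,\beta_0,a,\mu,d>0$ and consider the system $$\dot S=S(A-S)-\beta_0IS,\qquad \dot I=\beta_0IS-(\mu+d)I-\frac{rI}{a+I},\qquad \dot R=\frac{rI}{a+I}-\mu R.$$ Then the region $$\mathcal{M}=\left\{(S,I,R)\in(\mathbb{R}_0^+)^3:\ 0\le S\le A,\ 0\le S+I+R\le \frac{A(\mu+A)}{\mu},\ I,R\ge0\right\}$$ is positively flow-invariant, i.e. every trajectory starting in $\mathcal{M}$ remains in $\mathcal{M}$ for all $t\ge0$.
   Context: $S,I,R$ denote susceptible, infectious and recovered populations; $\mu$ is the natural death rate, $d$ the disease-induced death rate, $r$ the cure rate, $a$ a saturation constant of treatment, $\beta_0$ the transmission rate and $A$ the carrying capacity of susceptibles. $\mathbb{R}_0^+=[0,\infty)$. *)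

(* Defs.v *)
From Stdlib Require Import Reals Lra.
Open Scope R_scope.

Definition in_M (A mu S I Rr : R) : Prop :=
  0 <= S /\ S <= A /\ 0 <= I /\ 0 <= Rr /\
  0 <= S + I + Rr /\ S + I + Rr <= A * (mu + A) / mu.

Definition right_continuous_at (f : R -> R) (t0 : R) : Prop :=
  forall eps, 0 < eps -> exists delta, 0 < delta /\
    forall t, t0 <= t < t0 + delta -> Rabs (f t - f t0) < eps.

(* Main.v *)
Require Import Defs.
From Stdlib Require Import Reals.
From Stdlib Require Import Lra Psatz.
Open Scope R_scope.

Lemma cont_eps (f : R -> R) t : continuity_pt f t ->
  forall eps, 0 < eps -> exists d, 0 < d /\ forall s, Rabs (s - t) < d -> Rabs (f s - f t) < eps.
Proof.
  intros H eps He. destruct (H eps He) as [d [Hd Hf]].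
  exists d; split; [lra|]. intros s Hs.
  destruct (Req_dec s t) as [->|Hne].
  - unfold Rminus; rewrite Rplus_opp_r, Rabs_R0; lra.
  - apply (Hf s). split; [split; [exact I| congruence] | exact Hs].
Qed.

Lemma der_cont f t l : derivable_pt_lim f t l ->
  forall eps, 0 < eps -> exists d, 0 < d /\ forall s, Rabs (s - t) < d -> Rabs (f s - f t) < eps.
Proof.
  intro H. apply cont_eps. apply derivable_continuous_pt. exists l. exact H.
Qed.

Lemma rc_all (x : R -> R) l :
  (forall t, 0 < t -> derivable_pt_lim x t (l t)) ->
  right_continuous_at x 0 -> forall t, 0 <= t -> right_continuous_at x t.
Proof.
  intros Hd H0 t [Ht| <-]; [|exact H0].
  intros eps He. destruct (der_cont _ _ _ (Hd t Ht) eps He) as [d [Hdp Hc]].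
  exists d; split; [exact Hdp|]. intros s Hs. apply Hc.
  rewrite Rabs_right; lra.
Qed.

Lemma exp_neg_le1 M s : 0 <= M -> 0 <= s -> exp (- M * s) <= 1.
Proof.
  intros HM Hs. rewrite <- exp_0.
  destruct (Rle_lt_or_eq_dec (- M * s) 0) as [Hl|He]; [nra| |].
  - left; apply exp_increasing; exact Hl.
  - rewrite He; lra.
Qed.

Lemma barrier (x h q : R -> R) :
  (forall t, 0 < t -> derivable_pt_lim x t (x t * h t + q t)) ->
  (forall t, 0 < t -> 0 <= q t) ->
  right_continuous_at x 0 ->
  (forall t, 0 <= t -> x t = 0 -> exists delta M, 0 < delta /\
      forall s, t <= s < t + delta -> h s <= M) ->
  0 <= x 0 -> forall t, 0 <= t -> 0 <= x t.
Proof.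
  intros H1 Hq Hrc0 Hh H0 t1 Ht1.
  destruct (Rle_lt_dec 0 (x t1)) as [|Hneg]; [assumption|exfalso].
  assert (Ht1pos : 0 < t1) by (destruct Ht1 as [|<-]; lra).
  pose proof (rc_all x _ H1 Hrc0) as rc.
  set (E := fun t => (0 <= t <= t1) /\ 0 <= x t).
  destruct (completeness E) as [t0 [Hub Hlub]].
  { exists t1. intros y [[? ?] ?]; lra. }
  { exists 0. split; lra. }
  assert (t0ge0 : 0 <= t0) by (apply Hub; split; lra).
  assert (t0le : t0 <= t1) by (apply Hlub; intros y [[? ?] ?]; lra).
  assert (after : forall s, t0 < s <= t1 -> x s < 0).
  { intros s Hs. destruct (Rlt_le_dec (x s) 0) as [|Hge]; [assumption|].
    assert (s <= t0) by (apply Hub; split; lra). lra. }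
  assert (xt0ge : 0 <= x t0).
  { destruct t0ge0 as [pos| <-]; [|exact H0].
    destruct (Rlt_le_dec (x t0) 0) as [neg|]; [exfalso|assumption].
    destruct (der_cont _ _ _ (H1 t0 pos) (- x t0)) as [d [Hd Hc]]; [lra|].
    assert (t0 <= t0 - d / 2).
    { apply Hlub. intros y [[Hy1 Hy2] Hy3].
      assert (y <= t0) by (apply Hub; split; lra).
      destruct (Rle_lt_dec y (t0 - d/2)) as [|Hgt]; [assumption|exfalso].
      assert (Rabs (x y - x t0) < - x t0) by (apply Hc; rewrite Rabs_left1; lra).
      apply Rabs_def2 in H2. lra. }
    lra. }
  assert (t0lt : t0 < t1) by (destruct t0le as [|E1]; [assumption| rewrite E1 in xt0ge; lra]).
  assert (xt0eq : x t0 = 0).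
  { destruct xt0ge as [pos|]; [exfalso| congruence].
    destruct (rc t0 t0ge0 (x t0) pos) as [d [Hd Hc]].
    set (s := t0 + Rmin d (t1 - t0) / 2).
    assert (Hm1 : Rmin d (t1 - t0) <= d) by apply Rmin_l.
    assert (Hm2 : Rmin d (t1 - t0) <= t1 - t0) by apply Rmin_r.
    assert (Hm3 : 0 < Rmin d (t1 - t0)) by (apply Rmin_pos; lra).
    assert (Habs : Rabs (x s - x t0) < x t0) by (apply Hc; unfold s; lra).
    apply Rabs_def2 in Habs.
    assert (x s < 0) by (apply after; unfold s; lra). lra. }
  destruct (Hh t0 t0ge0 xt0eq) as [delta [M0 [Hd HM0]]].
  set (M := Rabs M0).
  assert (HM : 0 <= M) by apply Rabs_pos.
  assert (HMM : M0 <= M) by apply Rle_abs.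
  set (t2 := t0 + Rmin delta (t1 - t0) / 2).
  assert (Hm1 : Rmin delta (t1 - t0) <= delta) by apply Rmin_l.
  assert (Hm2 : Rmin delta (t1 - t0) <= t1 - t0) by apply Rmin_r.
  assert (Hm3 : 0 < Rmin delta (t1 - t0)) by (apply Rmin_pos; lra).
  assert (xt2 : x t2 < 0) by (apply after; unfold t2; lra).
  assert (Ht2a : t2 <= t1) by (unfold t2; lra).
  assert (Ht2b : t2 < t0 + delta) by (unfold t2; lra).
  assert (Ht2c : t0 < t2) by (unfold t2; lra).
  clearbody t2.
  set (w := fun s => x s * exp (- M * s)).
  assert (wt2 : w t2 < 0).
  { unfold w. pose proof (exp_pos (- M * t2)). nra. }
  destruct (rc t0 t0ge0 (- w t2)) as [d' [Hd' Hc']]; [lra|].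
  set (s := t0 + Rmin d' (t2 - t0) / 2).
  assert (Hn1 : Rmin d' (t2 - t0) <= d') by apply Rmin_l.
  assert (Hn2 : Rmin d' (t2 - t0) <= t2 - t0) by apply Rmin_r.
  assert (Hn3 : 0 < Rmin d' (t2 - t0)) by (apply Rmin_pos; lra).
  assert (Habs : Rabs (x s - x t0) < - w t2) by (apply Hc'; unfold s; lra).
  rewrite xt0eq in Habs; apply Rabs_def2 in Habs.
  assert (Hst2 : s < t2) by (unfold s; lra).
  assert (Hs0 : t0 < s) by (unfold s; lra).
  destruct (MVT_cor2 w (fun c => (x c * h c + q c) * exp (- M * c) + x c * (exp (- M * c) * (- M * 1))) s t2 Hst2)
    as [c [Hmvt Hc]].
  { intros c Hc. unfold w.
    apply (derivable_pt_lim_mult x (fun s => exp (- M * s))).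
    - apply H1; lra.
    - apply (derivable_pt_lim_comp (fun s => - M * s) exp).
      + apply (derivable_pt_lim_scal id). apply derivable_pt_lim_id.
      + apply derivable_pt_lim_exp. }
  assert (xc : x c < 0) by (apply after; lra).
  assert (hc : h c <= M) by (assert (h c <= M0) by (apply HM0; lra); lra).
  assert (qc : 0 <= q c) by (apply Hq; lra).
  pose proof (exp_pos (- M * c)) as ec.
  assert (Hder : 0 <= (x c * h c + q c) * exp (- M * c) + x c * (exp (- M * c) * (- M * 1))).
  { assert (0 <= x c * (h c - M)) by nra. nra. }
  assert (ws : x s <= w s).
  { assert (Hs0p : 0 <= s) by lra. assert (xs : x s < 0) by (apply after; lra). unfold w. pose proof (exp_neg_le1 M s HM Hs0p). nra. }
  nra.
Qed.
Lemma rc_minus_const K f : right_continuous_at f 0 -> right_continuous_at (fun t => K - f t) 0.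
Proof.
  intros H eps He. destruct (H eps He) as [d [Hd Hc]]. exists d; split; [exact Hd|].
  intros t Ht. replace (K - f t - (K - f 0)) with (- (f t - f 0)) by ring.
  rewrite Rabs_Ropp. apply Hc; exact Ht.
Qed.

Lemma rc_sum3 f g k : right_continuous_at f 0 -> right_continuous_at g 0 ->
  right_continuous_at k 0 -> right_continuous_at (fun t => f t + g t + k t) 0.
Proof.
  intros Hf Hg Hk eps He.
  destruct (Hf (eps/3)) as [d1 [Hd1 H1]]; [lra|].
  destruct (Hg (eps/3)) as [d2 [Hd2 H2]]; [lra|].
  destruct (Hk (eps/3)) as [d3 [Hd3 H3]]; [lra|].
  exists (Rmin d1 (Rmin d2 d3)). split.
  { apply Rmin_pos; [lra| apply Rmin_pos; lra]. }
  intros t Ht.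
  assert (m1 := Rmin_l d1 (Rmin d2 d3)). assert (m2 := Rmin_r d1 (Rmin d2 d3)).
  assert (m3 := Rmin_l d2 d3). assert (m4 := Rmin_r d2 d3).
  assert (A1 : Rabs (f t - f 0) < eps/3) by (apply H1; lra).
  assert (A2 : Rabs (g t - g 0) < eps/3) by (apply H2; lra).
  assert (A3 : Rabs (k t - k 0) < eps/3) by (apply H3; lra).
  apply Rabs_def2 in A1. apply Rabs_def2 in A2. apply Rabs_def2 in A3.
  apply Rabs_def1; lra.
Qed.

Lemma two_bounds (f g : R -> R) t e1 e2 :
  right_continuous_at f t -> right_continuous_at g t -> 0 < e1 -> 0 < e2 ->
  exists delta, 0 < delta /\ forall s, t <= s < t + delta ->
    Rabs (f s - f t) < e1 /\ Rabs (g s - g t) < e2.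
Proof.
  intros Hf Hg He1 He2.
  destruct (Hf e1 He1) as [d1 [Hd1 H1]]. destruct (Hg e2 He2) as [d2 [Hd2 H2]].
  exists (Rmin d1 d2). split; [apply Rmin_pos; lra|].
  intros s Hs. assert (m1 := Rmin_l d1 d2). assert (m2 := Rmin_r d1 d2).
  split; [apply H1 | apply H2]; lra.
Qed.

Theorem lemma3p1 (A r beta0 a mu d : R) (S I Rr : R -> R) :
  0 < A -> 0 < r -> 0 < beta0 -> 0 < a -> 0 < mu -> 0 < d ->
  (* (S, I, Rr) solves the system on t > 0 ... *)
  (forall t, 0 < t ->
     derivable_pt_lim S t (S t * (A - S t) - beta0 * I t * S t)) ->
  (forall t, 0 < t ->
     derivable_pt_lim I t
       (beta0 * I t * S t - (mu + d) * I t - r * I t / (a + I t))) ->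
  (forall t, 0 < t ->
     derivable_pt_lim Rr t (r * I t / (a + I t) - mu * Rr t)) ->
  (* ... and is continuous on [0, +oo) *)
  right_continuous_at S 0 -> right_continuous_at I 0 ->
  right_continuous_at Rr 0 ->
  in_M A mu (S 0) (I 0) (Rr 0) ->
  forall t, 0 <= t -> in_M A mu (S t) (I t) (Rr t).
Proof.
  intros HA Hr Hb Ha Hmu Hd HS HI HR HrcS HrcI HrcR [S0 [SA [I0 [R0 [N0 NK]]]]].
  pose proof (rc_all S _ HS HrcS) as rcS.
  pose proof (rc_all I _ HI HrcI) as rcI.
  assert (Spos : forall t, 0 <= t -> 0 <= S t).
  { apply (barrier S (fun t => A - S t - beta0 * I t) (fun _ => 0)); try assumption.
    - intros t Ht. replace (S t * (A - S t - beta0 * I t) + 0)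
        with (S t * (A - S t) - beta0 * I t * S t) by ring. apply HS; exact Ht.
    - intros; lra.
    - intros t0 Ht0 _.
      destruct (two_bounds S I t0 1 1 (rcS t0 Ht0) (rcI t0 Ht0)) as [dl [Hdl Hc]]; try lra.
      exists dl, (A - S t0 + 1 + beta0 * (- I t0 + 1)). split; [exact Hdl|].
      intros s Hs. destruct (Hc s Hs) as [B1 B2].
      apply Rabs_def2 in B1. apply Rabs_def2 in B2. nra. }
  assert (Ipos : forall t, 0 <= t -> 0 <= I t).
  { apply (barrier I (fun t => beta0 * S t - (mu + d) - r / (a + I t)) (fun _ => 0)); try assumption.
    - intros t Ht. replace (I t * (beta0 * S t - (mu + d) - r / (a + I t)) + 0)
        with (beta0 * I t * S t - (mu + d) * I t - r * I t / (a + I t))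
        by (unfold Rdiv; ring). apply HI; exact Ht.
    - intros; lra.
    - intros t0 Ht0 HI0.
      destruct (two_bounds S I t0 1 (a/2) (rcS t0 Ht0) (rcI t0 Ht0)) as [dl [Hdl Hc]]; try lra.
      exists dl, (beta0 * (S t0 + 1)). split; [exact Hdl|].
      intros s Hs. destruct (Hc s Hs) as [B1 B2].
      apply Rabs_def2 in B1. apply Rabs_def2 in B2. rewrite HI0 in B2.
      assert (Hp : 0 < a + I s) by lra.
      assert (0 <= r / (a + I s)) by (unfold Rdiv; pose proof (Rinv_0_lt_compat _ Hp); nra).
      nra. }
  assert (Rpos : forall t, 0 <= t -> 0 <= Rr t).
  { apply (barrier Rr (fun _ => - mu) (fun t => r * I t / (a + I t))); try assumption.
    - intros t Ht. replace (Rr t * - mu + r * I t / (a + I t))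
        with (r * I t / (a + I t) - mu * Rr t) by ring. apply HR; exact Ht.
    - intros t Ht. assert (0 <= I t) by (apply Ipos; lra).
      assert (Hp : 0 < a + I t) by lra.
      unfold Rdiv; pose proof (Rinv_0_lt_compat _ Hp); apply Rmult_le_pos; [apply Rmult_le_pos|]; lra.
    - intros t0 _ _. exists 1, (- mu). split; [lra|]. intros; lra. }
  assert (SleA : forall t, 0 <= t -> 0 <= A - S t).
  { apply (barrier (fun t => A - S t) (fun t => - S t) (fun t => beta0 * I t * S t)).
    - intros t Ht.
      pose proof (derivable_pt_lim_minus (fct_cte A) S t _ _ (derivable_pt_lim_const A t) (HS t Ht)) as H.
      replace ((A - S t) * - S t + beta0 * I t * S t)
        with (0 - (S t * (A - S t) - beta0 * I t * S t)) by ring. exact H.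
    - intros t Ht. assert (0 <= I t) by (apply Ipos; lra).
      assert (0 <= S t) by (apply Spos; lra). apply Rmult_le_pos; [apply Rmult_le_pos|]; lra.
    - apply rc_minus_const; exact HrcS.
    - intros t0 Ht0 _. exists 1, 0. split; [lra|]. intros s Hs.
      assert (0 <= S s) by (apply Spos; lra). lra.
    - lra. }
  set (K := A * (mu + A) / mu).
  assert (HK : K * mu = A * (mu + A)) by (unfold K; field; lra).
  assert (NleK : forall t, 0 <= t -> 0 <= K - (S t + I t + Rr t)).
  { apply (barrier (fun t => K - (S t + I t + Rr t)) (fun _ => - mu)
             (fun t => mu * K - S t * (A - S t) - mu * S t + d * I t)).
    - intros t Ht.
      pose proof (derivable_pt_lim_minus (fct_cte K) (S + I + Rr)%F t _ _
        (derivable_pt_lim_const K t)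
        (derivable_pt_lim_plus _ _ t _ _ (derivable_pt_lim_plus _ _ t _ _ (HS t Ht) (HI t Ht)) (HR t Ht))) as H.
      match type of H with derivable_pt_lim _ _ ?v =>
        replace (_ * - mu + _) with v by (unfold Rdiv; ring) end.
      exact H.
    - intros t Ht. assert (0 <= I t) by (apply Ipos; lra).
      assert (0 <= S t) by (apply Spos; lra).
      assert (0 <= A - S t) by (apply SleA; lra). nra.
    - apply rc_minus_const. apply rc_sum3; assumption.
    - intros t0 _ _. exists 1, (- mu). split; [lra|]. intros; lra.
    - unfold K in *. lra. }
  intros t Ht.
  pose proof (Spos t Ht). pose proof (Ipos t Ht). pose proof (Rpos t Ht).
  pose proof (SleA t Ht). pose proof (NleK t Ht).
  unfold in_M. fold K. repeat split; lra.
Qed.
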